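(* Let $(A,\mathfrak{g},\omega)$ be an $n$-plectic structure and $f_1,f_2\in\mathcal{P}ois(A,\mathfrak{g},\omega)$. Then $\{f_1,f_2\}$ is a well defined Poisson cotensor (independent of the choice of associated Hamilton tensors). If $x_1,x_2$ and $y_1,y_2$ are (homogeneous) tensors with $i_{x_i}\omega=df_i$ and $i_{y_i}\omega=f_i$, then the tensor $$y_{\{f_1,f_2\}}=[x_2,y_1]-(-1)^{(|x_1|-1)(|x_2|-1)}[x_1,y_2]$$ satisfies $i_{y_{\{f_1,f_2\}}}\omega=\{f_1,f_2\}$, and the tensor $$x_{\{f_1,f_2\}}:=[x_2,x_1]-(-1)^{(|x_1|-1)(|x_2|-1)}[x_1,x_2]$$ satisfies $i_{x_{\{f_1,f_2\}}}\omega=d\{f_1,f_2\}$.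
   Context: A Lie Rinehart pair $(A,\mathfrak{g})$: $A$ a commutative associative unital $\mathbb{R}$-algebra, $\mathfrak{g}$ a real Lie algebra that is an $A$-module, with a Lie algebra morphism $D:\mathfrak{g}\to\mathrm{Der}(A)$ such that $[x,ay]=D_x(a)y+a[x,y]$; torsionless means $\mathfrak{g}\to\mathfrak{g}^{\vee\vee}$ ($\mathfrak{g}^\vee=\mathrm{Hom}_A(\mathfrak{g},A)$) is injective. Tensors $X(\mathfrak{g},A)=\bigoplus_k\Lambda^k_A\mathfrak{g}$, cotensors $\Omega(\mathfrak{g},A)=\bigoplus_k\Lambda^k_A\mathfrak{g}^\vee$; tensor grading $|x|=k$ for $x\in\Lambda^k_A\mathfrak{g}$, $|f|=-k$ for $f\in\Lambda^k_A\mathfrak{g}^\vee$. Right contraction: $\langle i_xf,z\rangle=\langle f,x\wedge z\rangle$ for all tensors $z$, with $\langle\cdot,\cdot\rangle$ the natural determinant pairing. De Rham differential: $df(x_0\wedge\cdots\wedge x_k)=\sum_j(-1)^jD_{x_j}(f(\cdots\widehat{x_j}\cdots))+\sum_{i<j}(-1)^{i+j}f([x_i,x_j]\wedge\cdots\widehat{x_i}\cdots\widehat{x_j}\cdots)$. Lie derivative along homogeneous tensor $x$: $L_xf=di_xf-(-1)^{|x|}i_xdf$. Schouten–Nijenhuis bracket on $X(\mathfrak{g},A)$: $[a,b]=0$, $[x,a]=[a,x]=D_x(a)$ for $a,b\in A$, $x\in\mathfrak{g}$, the Lie bracket on $\mathfrak{g}$, and $[x_1\wedge\cdots\wedge x_p,y_1\wedge\cdots\wedge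 y_q]=\sum_{i,j}(-1)^{i+j}[x_i,y_j]\wedge x_1\wedge\cdots\widehat{x_i}\cdots\wedge x_p\wedge y_1\wedge\cdots\widehat{y_j}\cdots\wedge y_q$, extended additively. An $n$-plectic structure is a torsionless Lie Rinehart pair with $\omega\in\Lambda^{n+1}_A\mathfrak{g}^\vee$, $d\omega=0$. A Poisson cotensor is a cotensor $f$ admitting tensors $x$ with $i_x\omega=df$ (Hamilton tensor) and $y$ with $i_y\omega=f$ (Poisson constraint); $\mathcal{P}ois(A,\mathfrak{g},\omega)$ is their set. The homotopy Poisson 2-bracket is defined for homogeneous $f_1,f_2\in\mathcal{P}ois(A,\mathfrak{g},\omega)$ with associated homogeneous Hamilton tensors $x_1,x_2$ by $\{f_1,f_2\}=-L_{x_1}f_2+(-1)^{(|x_1|-1)(|x_2|-1)}L_{x_2}f_1$, and extended by linearity. *)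

(* Defs.v *)
From HB Require Import structures.
From mathcomp Require Import all_boot all_order all_algebra.
From mathcomp Require Import reals.
Set Implicit Arguments. Unset Strict Implicit. Unset Printing Implicit Defensive.
Import Order.TTheory GRing.Theory Num.Theory.
Local Open Scope ring_scope.

Section LieRinehart.
Variables (R : realType) (A : comAlgType R) (g : lmodType A).

(* (A, g) with bracket [br] and anchor [D] is a Lie-Rinehart pair:
   g is a real Lie algebra (real scalars act through r%:A), D is an
   A-linear Lie algebra morphism into the R-linear derivations of A,
   and the Leibniz rule [x, a y] = D_x(a) y + a [x, y] holds. *)
Record lie_rinehart (br : g -> g -> g) (D : g -> A -> A) : Prop := {
  lr_brDl : forall x y z, br (x + y) z = br x z + br y z;
  lr_brDr : forall x y z, br x (y + z) = br x y + br x z;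
  lr_brZl : forall (r : R) x y, br (r%:A *: x) y = r%:A *: br x y;
  lr_brZr : forall (r : R) x y, br x (r%:A *: y) = r%:A *: br x y;
  lr_br_alt : forall x, br x x = 0;
  lr_jacobi : forall x y z, br x (br y z) + br y (br z x) + br z (br x y) = 0;
  lr_D_lin : forall (a : A) x y b, D (a *: x + y) b = a * D x b + D y b;
  lr_D_add : forall x b c, D x (b + c) = D x b + D x c;
  lr_D_scale : forall x (r : R) b, D x (r *: b) = r *: D x b;
  lr_D_mul : forall x b c, D x (b * c) = b * D x c + D x b * c;
  lr_D_br : forall x y b, D (br x y) b = D x (D y b) - D y (D x b);
  lr_leibniz : forall x (a : A) y, br x (a *: y) = D x a *: y + a *: br x y
}.

Definition Alinear (phi : g -> A) : Prop :=
  forall (a : A) u v, phi (a *: u + v) = a * phi u + phi v.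

Definition torsionless : Prop :=
  forall x : g, (forall phi : g -> A, Alinear phi -> phi x = 0) -> x = 0.

Record dual := Dual { dval :> g -> A; dvalP : Alinear dval }.

Lemma Alinear0 : Alinear (fun _ => 0).
Proof. by move=> a u v; rewrite mulr0 addr0. Qed.
Definition dual0 : dual := Dual Alinear0.

(* Tensors: formal A-linear combinations of words x_1 /\ ... /\ x_k
   (representatives of elements of X(g,A) = (+)_k Lambda^k_A g). *)
Definition tensor := seq (A * seq g).
(* Cotensors: formal A-linear combinations of words f_1 /\ ... /\ f_k,
   f_i in g^vee (representatives of elements of (+)_k Lambda^k_A g^vee). *)
Definition cotensor := seq (A * seq dual).

Definition homog {T} (k : nat) (s : seq (A * seq T)) : bool :=
  all (fun p => size p.2 == k) s.

(* Cotensors are observed through the determinant pairing with tensors: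
   a functional on words of g (the word x_1..x_k stands for x_1/\../\x_k). *)
Definition functional := seq g -> A.

Definition cot_eval (s : cotensor) : functional := fun xs =>
  \sum_(p <- s | size p.2 == size xs)
     p.1 * \det (\matrix_(i < size xs, j < size xs)
                   (nth dual0 p.2 i) (nth 0 xs j)).

Definition drop_at {T} (i : nat) (s : seq T) := take i s ++ drop i.+1 s.

Variables (br : g -> g -> g) (D : g -> A -> A).

Definition ictr (x : tensor) (F : functional) : functional := fun zs =>
  \sum_(p <- x) p.1 * F (p.2 ++ zs).

Definition deR (F : functional) : functional := fun xs =>
  \sum_(j < size xs) (-1) ^+ j * D (nth 0 xs j) (F (drop_at j xs)) +
  \sum_(i < size xs) \sum_(j < size xs | (i < j)%N)
     (-1) ^+ (i + j) * F (br (nth 0 xs i) (nth 0 xs j)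
                             :: drop_at i (drop_at j xs)).

Definition lieD (x : tensor) (k : nat) (F : functional) : functional :=
  fun zs => deR (ictr x F) zs - (-1) ^+ k * ictr x (deR F) zs.

(* the sign (-1)^((k1-1)(k2-1)) *)
Definition psign (k1 k2 : nat) : A := (-1) ^+ (k1.+1 * k2.+1).

Definition pbr (x1 : tensor) (k1 : nat) (x2 : tensor) (k2 : nat)
  (F1 F2 : functional) : functional := fun zs =>
  - lieD x1 k1 F2 zs + psign k1 k2 * lieD x2 k2 F1 zs.

(* Schouten-Nijenhuis bracket on representatives. A term (a, x1::r) is the
   word (a x1) /\ r; a term (a, [::]) is the scalar a. *)
Definition absorb (a : A) (w : seq g) : seq g :=
  if w is x :: r then (a *: x) :: r else w.

Definition sn_word (w1 w2 : seq g) : tensor :=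
  flatten (map (fun i => map (fun j => ((-1) ^+ (i + j),
                     br (nth 0 w1 i) (nth 0 w2 j) :: drop_at i w1 ++ drop_at j w2))
               (iota 0 (size w2))) (iota 0 (size w1))).

Definition sn_vs (w : seq g) (a : A) : tensor :=
  [seq ((-1) ^+ (size w - i.+1) * D (nth 0 w i) a, drop_at i w)
  | i <- iota 0 (size w)].

Definition sn_sv (a : A) (w : seq g) : tensor :=
  [seq ((-1) ^+ j.+1 * D (nth 0 w j) a, drop_at j w) | j <- iota 0 (size w)].

Definition sn_term (p q : A * seq g) : tensor :=
  match p.2, q.2 with
  | [::], [::] => [::]
  | [::], _ => sn_sv p.1 (absorb q.1 q.2)
  | _, [::] => sn_vs (absorb p.1 p.2) q.1
  | _, _ => sn_word (absorb p.1 p.2) (absorb q.1 q.2)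
  end.

Definition schouten (s t : tensor) : tensor :=
  flatten (map (fun p => flatten (map (sn_term p) t)) s).

Definition tcomb (s : tensor) (c : A) (t : tensor) : tensor :=
  s ++ [seq (c * p.1, p.2) | p <- t].

End LieRinehart.

(* Main.v *)
Require Import Defs.
From HB Require Import structures.
From mathcomp Require Import all_boot all_order all_algebra.
From mathcomp Require Import reals.
From Stdlib Require Import FunctionalExtensionality.
From mathcomp Require Import ring zify.
From mathcomp Require Import fingroup perm.
Import Order.TTheory GRing.Theory Num.Theory.
Local Open Scope ring_scope.

Section Dev.
Local Set Implicit Arguments.
Local Unset Strict Implicit.
Variables (R : realType) (A : comAlgType R) (g : lmodType A).
Variables (br : g -> g -> g) (D : g -> A -> A).
Hypothesis LR : lie_rinehart br D.

Local Notation fn := (seq g -> A).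

Lemma brDl x y z : br (x + y) z = br x z + br y z. Proof. exact: (lr_brDl LR). Qed.
Lemma brDr x y z : br x (y + z) = br x y + br x z. Proof. exact: (lr_brDr LR). Qed.
Lemma br0l y : br 0 y = 0.
Proof. have h := brDl 0 0 y; rewrite addr0 in h. by apply: (addrI (br 0 y)); rewrite addr0 -h. Qed.
Lemma br0r y : br y 0 = 0.
Proof. have h := brDr y 0 0; rewrite addr0 in h. by apply: (addrI (br y 0)); rewrite addr0 -h. Qed.
Lemma brNl x y : br (- x) y = - br x y.
Proof. by apply: (addrI (br x y)); rewrite -brDl !subrr br0l. Qed.
Lemma brNr x y : br x (- y) = - br x y.
Proof. by apply: (addrI (br x y)); rewrite -brDr !subrr br0r. Qed.
Lemma br_anti x y : br x y = - br y x.
Proof.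
have h := lr_br_alt LR (x + y).
rewrite brDl !brDr !(lr_br_alt LR) add0r addr0 in h.
by apply/eqP; rewrite -subr_eq0 opprK h.
Qed.
Lemma brZl a u x : br (a *: u) x = a *: br u x - D x a *: u.
Proof.
by rewrite br_anti (lr_leibniz LR) opprD addrC -scalerN -br_anti.
Qed.
Lemma brZr a u x : br x (a *: u) = D x a *: u + a *: br x u.
Proof. exact: (lr_leibniz LR). Qed.
Lemma jacobi x y z : br x (br y z) - br y (br x z) = br (br x y) z.
Proof.
have h := lr_jacobi LR x y z.
rewrite [br z x]br_anti brNr [br z (br x y)]br_anti in h.
by apply/eqP; rewrite -subr_eq0; apply/eqP.
Qed.

Lemma D0l b : D 0 b = 0.
Proof.
have h := lr_D_lin LR 1 0 0 b. rewrite scaler0 addr0 mul1r in h.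
by apply: (addrI (D 0 b)); rewrite addr0 -h.
Qed.
Lemma DDl u v b : D (u + v) b = D u b + D v b.
Proof. by rewrite -{1}[u]scale1r (lr_D_lin LR) mul1r. Qed.
Lemma DZl a u b : D (a *: u) b = a * D u b.
Proof. by rewrite -[a *: u]addr0 (lr_D_lin LR) D0l addr0. Qed.
Lemma DNl u b : D (- u) b = - D u b.
Proof. by rewrite -scaleN1r DZl mulN1r. Qed.
Lemma DDr x b c : D x (b + c) = D x b + D x c. Proof. exact: (lr_D_add LR). Qed.
Lemma D0r x : D x 0 = 0.
Proof. have h := DDr x 0 0; rewrite addr0 in h. by apply: (addrI (D x 0)); rewrite addr0 -h. Qed.
Lemma DNr x b : D x (- b) = - D x b.
Proof. by apply: (addrI (D x b)); rewrite -DDr !subrr D0r. Qed.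
Lemma DBr x b c : D x (b - c) = D x b - D x c.
Proof. by rewrite DDr DNr. Qed.
Lemma DMr x b c : D x (b * c) = b * D x c + D x b * c. Proof. exact: (lr_D_mul LR). Qed.
Lemma Dsumr x I (s : seq I) (P : pred I) (f : I -> A) :
  D x (\sum_(i <- s | P i) f i) = \sum_(i <- s | P i) D x (f i).
Proof.
elim: s => [|i s IH]; first by rewrite !big_nil D0r.
by rewrite !big_cons; case: (P i); rewrite ?DDr IH.
Qed.
Lemma D_sign x k : D x ((-1) ^+ k) = 0.
Proof.
elim: k => [|k IH].
  have h := DMr x 1 1. rewrite !mulr1 mul1r in h.
  by rewrite expr0; apply: (addrI (D x 1)); rewrite addr0 -h.
by rewrite exprS mulN1r DNr IH oppr0.
Qed.
Lemma DMsign x k b : D x ((-1) ^+ k * b) = (-1) ^+ k * D x b.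
Proof. by rewrite DMr D_sign mul0r addr0. Qed.

Definition alt (F : fn) := forall pre u v r, F (pre ++ u :: v :: r) = - F (pre ++ v :: u :: r).
Definition lin (F : fn) := forall pre a u v r,
  F (pre ++ (a *: u + v) :: r) = a * F (pre ++ u :: r) + F (pre ++ v :: r).
Definition AM F := alt F /\ lin F.

Section AMth.
Variable F : fn.
Hypothesis HF : AM F.
Lemma AM_alt : alt F. Proof. by case: HF. Qed.
Lemma AM_lin : lin F. Proof. by case: HF. Qed.
Lemma AM_D pre u v r : F (pre ++ (u + v) :: r) = F (pre ++ u :: r) + F (pre ++ v :: r).
Proof. by rewrite -{1}[u]scale1r AM_lin mul1r. Qed.
Lemma AM_0 pre r : F (pre ++ 0 :: r) = 0.
Proof. have h := AM_D pre 0 0 r; rewrite addr0 in h. by apply: (addrI (F (pre ++ 0 :: r))); rewrite addr0 -h. Qed.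
Lemma AM_Z pre a u r : F (pre ++ (a *: u) :: r) = a * F (pre ++ u :: r).
Proof. by rewrite -[a *: u]addr0 AM_lin AM_0 addr0. Qed.
Lemma AM_N pre u r : F (pre ++ (- u) :: r) = - F (pre ++ u :: r).
Proof. by rewrite -scaleN1r AM_Z mulN1r. Qed.
Lemma AM_B pre u v r : F (pre ++ (u - v) :: r) = F (pre ++ u :: r) - F (pre ++ v :: r).
Proof. by rewrite AM_D AM_N. Qed.
End AMth.


Definition iv (v : g) (F : fn) : fn := fun zs => F (v :: zs).
Definition iw (w : seq g) (F : fn) : fn := fun zs => F (w ++ zs).
Definition theta (v : g) (F : fn) : fn := fun xs =>
  D v (F xs) - \sum_(j < size xs) (-1) ^+ j * F (br v (nth 0 xs j) :: drop_at j xs).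
Definition wedge1 (a : A) (F : fn) : fn := fun xs =>
  \sum_(j < size xs) (-1) ^+ j * (D (nth 0 xs j) a * F (drop_at j xs)).
Local Notation d := (deR br D).

Lemma signS k : (-1) ^+ k.+1 = - (-1) ^+ k :> A.
Proof. by rewrite exprS mulN1r. Qed.

Lemma drop_at0 T (x : T) xs : drop_at 0 (x :: xs) = xs. Proof. by rewrite /drop_at /= drop0. Qed.
Lemma drop_atS T (x : T) xs j : drop_at j.+1 (x :: xs) = x :: drop_at j xs. Proof. by []. Qed.
Lemma bump0 i : bump 0 i = i.+1. Proof. by []. Qed.

Lemma front_alt F : alt F -> forall u v r, F (u :: v :: r) = - F (v :: u :: r).
Proof. by move=> h u v r; exact: (h [::]). Qed.

Lemma theta_nil v F : theta v F [::] = D v (F [::]).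
Proof. by rewrite /theta big_ord0 subr0. Qed.

Lemma theta_cons v F x xs : alt F ->
  theta v F (x :: xs) = theta v (iv x F) xs - F (br v x :: xs).
Proof.
move=> hF; rewrite /theta /iv /= big_ord_recl /= expr0 mul1r.
rewrite drop_at0 opprD addrA [in RHS]addrAC; congr (_ + - _).
apply: eq_bigr => j _; rewrite bump0 add0n drop_atS signS (front_alt hF).
by rewrite mulrNN.
Qed.

Lemma wedge1_cons a F x xs :
  wedge1 a F (x :: xs) = D x a * F xs - wedge1 a (iv x F) xs.
Proof.
rewrite /wedge1 /iv /= big_ord_recl /= expr0 mul1r drop_at0; congr (_ + _).
rewrite -sumrN; apply: eq_bigr => j _; rewrite bump0 add0n drop_atS signS.
by rewrite mulNr.
Qed.

Lemma deR_nil F : d F [::] = 0.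
Proof. by rewrite /deR !big_ord0 addr0. Qed.

Lemma sum2_recl n (f : nat -> nat -> A) :
  \sum_(i < n.+1) \sum_(j < n.+1 | (i < j)%N) f i j =
  \sum_(j < n) f 0%N j.+1 + \sum_(i < n) \sum_(j < n | (i < j)%N) f i.+1 j.+1.
Proof.
rewrite big_ord_recl; congr (_ + _).
  by rewrite big_mkcond big_ord_recl /= add0r.
apply: eq_bigr => i _; rewrite big_mkcond big_ord_recl /= add0r.
by rewrite [RHS]big_mkcond; apply: eq_bigr => j _ /=; rewrite !bump0 ltnS.
Qed.

Lemma deR_cons F x xs : alt F ->
  d F (x :: xs) = theta x F xs - d (iv x F) xs.
Proof.
move=> hF.
rewrite /deR /theta /iv /=.
rewrite (sum2_recl (size xs) (fun i j => (-1) ^+ (i + j) * F (br (nth 0 (x :: xs) i) (nth 0 (x :: xs) j) :: drop_at i (drop_at j (x :: xs))))).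
rewrite big_ord_recl /= expr0 mul1r drop_at0.
have e1 : \sum_(i < size xs) (-1) ^+ bump 0 i * D xs`_(0 + i) (F (drop_at (bump 0 i) (x :: xs)))
   = - \sum_(j < size xs) (-1) ^+ j * D xs`_j (F (x :: drop_at j xs)).
  by rewrite -sumrN; apply: eq_bigr => j _; rewrite bump0 add0n drop_atS signS mulNr.
have e2 : \sum_(j < size xs) (-1) ^+ (0 + j.+1) * F (br x xs`_j :: drop_at 0 (drop_at j.+1 (x :: xs)))
   = - \sum_(j < size xs) (-1) ^+ j * F (br x xs`_j :: drop_at j xs).
  by rewrite -sumrN; apply: eq_bigr => j _; rewrite add0n drop_atS drop_at0 signS mulNr.
have e3 : \sum_(i < size xs) \sum_(j < size xs | (i < j)%N)
        (-1) ^+ (i.+1 + j.+1) * F (br xs`_i xs`_j :: drop_at i.+1 (drop_at j.+1 (x :: xs)))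
   = - \sum_(i < size xs) \sum_(j < size xs | (i < j)%N)
        (-1) ^+ (i + j) * F [:: x, br xs`_i xs`_j & drop_at i (drop_at j xs)].
  rewrite -sumrN; apply: eq_bigr => i _; rewrite -sumrN; apply: eq_bigr => j _.
  by rewrite !drop_atS (front_alt hF) addSn addnS !signS opprK mulrN.
rewrite e1 e2 e3; ring.
Qed.

Lemma deR_add F G xs : d (fun zs => F zs + G zs) xs = d F xs + d G xs.
Proof.
rewrite /deR addrACA; congr (_ + _).
  by rewrite -big_split; apply: eq_bigr => j _; rewrite DDr mulrDr.
rewrite -big_split; apply: eq_bigr => i _; rewrite -big_split.
by apply: eq_bigr => j _; rewrite mulrDr.
Qed.
Lemma deR_opp F xs : d (fun zs => - F zs) xs = - d F xs.
Proof.
rewrite /deR opprD -!sumrN; congr (_ + _).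
  by apply: eq_bigr => j _; rewrite DNr mulrN.
apply: eq_bigr => i _; rewrite -sumrN; apply: eq_bigr => j _; by rewrite mulrN.
Qed.
Lemma deR_0 xs : d (fun _ => 0) xs = 0.
Proof.
rewrite /deR big1 ?add0r; last by move=> j _; rewrite D0r mulr0.
by rewrite big1 // => i _; rewrite big1 // => j _; rewrite mulr0.
Qed.
Lemma deR_sub F G xs : d (fun zs => F zs - G zs) xs = d F xs - d G xs.
Proof. by rewrite deR_add deR_opp. Qed.
Lemma deR_scale a F xs : d (fun zs => a * F zs) xs = a * d F xs + wedge1 a F xs.
Proof.
rewrite /deR /wedge1 mulrDr addrAC; congr (_ + _).
  rewrite mulr_sumr -big_split; apply: eq_bigr => j _.
  by rewrite DMr mulrDr !mulrA [a * _]mulrC.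
rewrite mulr_sumr; apply: eq_bigr => i _; rewrite mulr_sumr; apply: eq_bigr => j _.
by rewrite !mulrA [a * _]mulrC.
Qed.
Lemma deR_sum I (s : seq I) (G : I -> fn) xs :
  d (fun zs => \sum_(i <- s) G i zs) xs = \sum_(i <- s) d (G i) xs.
Proof.
elim: s => [|i s IH].
  have -> : (fun zs => \sum_(i <- [::]) G i zs) = (fun _ => 0).
    by apply: functional_extensionality => zs; rewrite big_nil.
  by rewrite deR_0 big_nil.
have -> : (fun zs => \sum_(j <- i :: s) G j zs) = (fun zs => G i zs + \sum_(j <- s) G j zs).
  by apply: functional_extensionality => zs; rewrite big_cons.
by rewrite deR_add IH big_cons.
Qed.

Lemma theta_add v F G xs : theta v (fun zs => F zs + G zs) xs = theta v F xs + theta v G xs.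
Proof.
rewrite /theta DDr; under eq_bigr do rewrite mulrDr; rewrite big_split /=; ring.
Qed.
Lemma theta_opp v F xs : theta v (fun zs => - F zs) xs = - theta v F xs.
Proof.
rewrite /theta DNr; under eq_bigr do rewrite mulrN; rewrite sumrN; ring.
Qed.
Lemma theta_sub v F G xs : theta v (fun zs => F zs - G zs) xs = theta v F xs - theta v G xs.
Proof. by rewrite theta_add theta_opp. Qed.
Lemma theta_scale v a F xs : theta v (fun zs => a * F zs) xs = a * theta v F xs + D v a * F xs.
Proof.
rewrite /theta DMr; under eq_bigr do rewrite mulrCA; rewrite -mulr_sumr; ring.
Qed.

Lemma wedge1_add a F G xs : wedge1 a (fun zs => F zs + G zs) xs = wedge1 a F xs + wedge1 a G xs.
Proof. by rewrite /wedge1 -big_split; apply: eq_bigr => j _; rewrite !mulrDr. Qed.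
Lemma wedge1_opp a F xs : wedge1 a (fun zs => - F zs) xs = - wedge1 a F xs.
Proof. by rewrite /wedge1 -sumrN; apply: eq_bigr => j _; rewrite !mulrN. Qed.
Lemma wedge1_scale a c F xs : wedge1 a (fun zs => c * F zs) xs = c * wedge1 a F xs.
Proof.
rewrite /wedge1 mulr_sumr; apply: eq_bigr => j _; ring.
Qed.
Lemma wedge1_addl a b F xs : wedge1 (a + b) F xs = wedge1 a F xs + wedge1 b F xs.
Proof. by rewrite /wedge1 -big_split; apply: eq_bigr => j _; rewrite DDr !mulrDl mulrDr. Qed.
Lemma wedge1_sign k F xs : wedge1 ((-1) ^+ k) F xs = 0.
Proof. by rewrite /wedge1 big1 // => j _; rewrite D_sign mul0r mulr0. Qed.

Lemma deR_csign k F xs : d (fun zs => (-1) ^+ k * F zs) xs = (-1) ^+ k * d F xs.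
Proof. by rewrite deR_scale wedge1_sign addr0. Qed.
Lemma theta_csign v k F xs : theta v (fun zs => (-1) ^+ k * F zs) xs = (-1) ^+ k * theta v F xs.
Proof. by rewrite theta_scale D_sign mul0r addr0. Qed.

Lemma funE (F G : fn) : (forall zs, F zs = G zs) -> F = G.
Proof. exact: functional_extensionality. Qed.

Definition alt_at pre (G : fn) := forall u v r, G (pre ++ u :: v :: r) = - G (pre ++ v :: u :: r).
Definition lin_at pre (G : fn) := forall a u v r,
  G (pre ++ (a *: u + v) :: r) = a * G (pre ++ u :: r) + G (pre ++ v :: r).

Lemma alt_at_cons pre x (G P Q : fn) : (forall ys, G (x :: ys) = P ys - Q ys) ->
  alt_at pre P -> alt_at pre Q -> alt_at (x :: pre) G.
Proof. move=> h hP hQ u v r /=; rewrite !h hP hQ; ring. Qed.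
Lemma lin_at_cons pre x (G P Q : fn) : (forall ys, G (x :: ys) = P ys - Q ys) ->
  lin_at pre P -> lin_at pre Q -> lin_at (x :: pre) G.
Proof. move=> h hP hQ a u v r /=; rewrite !h hP hQ; ring. Qed.
Lemma AM_at F : (forall pre, alt_at pre F /\ lin_at pre F) -> AM F.
Proof. by move=> h; split => pre; case: (h pre). Qed.

Lemma AM_iv v F : AM F -> AM (iv v F).
Proof. by case=> ha hl; split => pre; rewrite /iv; [exact: (ha (v :: pre)) | exact: (hl (v :: pre))]. Qed.
Lemma AM_iw w F : AM F -> AM (iw w F).
Proof. by case=> ha hl; split => pre; rewrite /iw => *; rewrite !catA; [exact: ha | exact: hl]. Qed.
Lemma AM_add F G : AM F -> AM G -> AM (fun zs => F zs + G zs).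
Proof. by case=> ha hl [ha' hl']; split => pre *; [rewrite ha ha' | rewrite hl hl']; ring. Qed.
Lemma AM_opp F : AM F -> AM (fun zs => - F zs).
Proof. by case=> ha hl; split => pre *; [rewrite ha | rewrite hl]; ring. Qed.
Lemma AM_sub F G : AM F -> AM G -> AM (fun zs => F zs - G zs).
Proof. by move=> hF hG; apply: AM_add => //; apply: AM_opp. Qed.
Lemma AM_scale c F : AM F -> AM (fun zs => c * F zs).
Proof. by case=> ha hl; split => pre *; [rewrite ha | rewrite hl]; ring. Qed.
Lemma AM_zero : AM (fun _ => 0).
Proof. by split => pre *; ring. Qed.
Lemma AM_sum I (s : seq I) (G : I -> fn) : (forall i, AM (G i)) -> AM (fun zs => \sum_(i <- s) G i zs).
Proof.
move=> hG; elim: s => [|i s IH].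
  have -> : (fun zs => \sum_(i <- [::]) G i zs) = (fun _ => 0) by apply: funE => zs; rewrite big_nil.
  exact: AM_zero.
have -> : (fun zs => \sum_(j <- i :: s) G j zs) = (fun zs => G i zs + \sum_(j <- s) G j zs).
  by apply: funE => zs; rewrite big_cons.
exact: AM_add.
Qed.
Lemma AM_ictr (x : seq (A * seq g)) F : AM F -> AM (ictr x F).
Proof.
move=> hF; have -> : ictr x F = (fun zs => \sum_(p <- x) p.1 * iw p.2 F zs) by [].
by apply: AM_sum => p; apply: AM_scale; apply: AM_iw.
Qed.

Lemma AM_theta v F : AM F -> AM (theta v F).
Proof.
move=> HF0; apply: AM_at => pre; elim: pre F HF0 => [|x pre IH] F HF; last first.
  have [IHa IHl] := IH _ (AM_iv x HF).
  have h : forall ys, theta v F (x :: ys) = theta v (iv x F) ys - iv (br v x) F ys.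
    by move=> ys; rewrite (theta_cons _ _ _ (AM_alt HF)).
  split; [apply: (alt_at_cons h) | apply: (lin_at_cons h)] => //.
    by move=> *; rewrite /iv; apply: (AM_alt HF (br v x :: pre)).
  by move=> *; rewrite /iv; apply: (AM_lin HF (br v x :: pre)).
have hA := AM_alt HF.
split.
  move=> u w r /=.
  rewrite (theta_cons _ _ _ hA) (theta_cons _ _ _ (AM_alt (AM_iv u HF))).
  rewrite (theta_cons _ _ _ hA) (theta_cons _ _ _ (AM_alt (AM_iv w HF))).
  have -> : iv u (iv w F) = (fun zs => - iv w (iv u F) zs).
    by apply: funE => zs; rewrite /iv (front_alt hA).
  rewrite theta_opp /iv (front_alt hA u) (front_alt hA w); ring.
move=> a u w r /=.
rewrite !(theta_cons _ _ _ hA).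
have -> : iv (a *: u + w) F = (fun zs => a * iv u F zs + iv w F zs).
  by apply: funE => zs; rewrite /iv (AM_lin HF [::]).
rewrite theta_add theta_scale brDr brZr /iv.
rewrite (AM_D HF [::]) (AM_D HF [::]) !(AM_Z HF [::]) /=; ring.
Qed.

Lemma theta_vadd u w F xs : AM F -> theta (u + w) F xs = theta u F xs + theta w F xs.
Proof.
move=> HF; rewrite /theta DDl.
under eq_bigr do rewrite brDl (AM_D HF [::]) /= mulrDr.
rewrite big_split /=; ring.
Qed.
Lemma theta_vZ a u F xs : AM F -> theta (a *: u) F xs = a * theta u F xs + wedge1 a (iv u F) xs.
Proof.
move=> HF; rewrite /theta /wedge1 /iv DZl.
under eq_bigr do rewrite brZl (AM_B HF [::]) /= (AM_Z HF [::]) /= (AM_Z HF [::]) /= mulrBr.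
rewrite sumrB; under eq_bigr do rewrite mulrCA.
rewrite -mulr_sumr; ring.
Qed.

Lemma AM_deR F : AM F -> AM (d F).
Proof.
move=> HF0; apply: AM_at => pre; elim: pre F HF0 => [|x pre IH] F HF; last first.
  have [IHa IHl] := IH _ (AM_iv x HF).
  have h : forall ys, d F (x :: ys) = theta x F ys - d (iv x F) ys.
    by move=> ys; rewrite (deR_cons _ _ (AM_alt HF)).
  have [tA tL] := AM_theta x HF.
  by split; [apply: (alt_at_cons h) | apply: (lin_at_cons h)].
have hA := AM_alt HF.
split.
  move=> u w r /=.
  rewrite (deR_cons _ _ hA) (deR_cons _ _ (AM_alt (AM_iv u HF))).
  rewrite (deR_cons _ _ hA) (deR_cons _ _ (AM_alt (AM_iv w HF))).
  rewrite (theta_cons _ _ _ hA) (theta_cons _ _ _ hA).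
  have -> : iv u (iv w F) = (fun zs => - iv w (iv u F) zs).
    by apply: funE => zs; rewrite /iv (front_alt hA).
  rewrite deR_opp [br w u]br_anti /iv (AM_N HF [::]) /=; ring.
move=> a u w r /=.
rewrite !(deR_cons _ _ hA).
have -> : iv (a *: u + w) F = (fun zs => a * iv u F zs + iv w F zs).
  by apply: funE => zs; rewrite /iv (AM_lin HF [::]).
rewrite deR_add deR_scale (theta_vadd _ _ _ HF) (theta_vZ _ _ _ HF).
ring.
Qed.

Lemma iv_theta x v F : alt F ->
  iv x (theta v F) = (fun zs => theta v (iv x F) zs - iv (br v x) F zs).
Proof. by move=> hA; apply: funE => zs; rewrite /iv (theta_cons _ _ _ hA). Qed.
Lemma iv_deR x F : alt F ->
  iv x (d F) = (fun zs => theta x F zs - d (iv x F) zs).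
Proof. by move=> hA; apply: funE => zs; rewrite /iv (deR_cons _ _ hA). Qed.

Lemma theta_comm x y F xs : AM F ->
  theta x (theta y F) xs - theta y (theta x F) xs = theta (br x y) F xs.
Proof.
elim: xs F => [|z zs IH] F HF.
  by rewrite !theta_nil (lr_D_br LR).
have hA := AM_alt HF.
rewrite (theta_cons _ _ _ (AM_alt (AM_theta y HF))) (theta_cons _ _ _ (AM_alt (AM_theta x HF))).
rewrite !(iv_theta _ _ hA) (theta_sub x (theta y (iv z F)) (iv (br y z) F)).
rewrite (theta_sub y (theta x (iv z F)) (iv (br x z) F)) !(theta_cons _ _ _ hA).
rewrite -(IH _ (AM_iv z HF)) -jacobi (AM_B HF [::]) /=; ring.
Qed.

Lemma dd_theta xs : forall F, AM F ->
  d (d F) xs = 0 /\ forall x, theta x (d F) xs = d (theta x F) xs.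
Proof.
elim: xs => [|y ys IH] F HF.
  by split; [rewrite deR_nil | move=> x; rewrite theta_nil !deR_nil D0r].
have hA := AM_alt HF; have hdA := AM_alt (AM_deR HF).
have [IH1 IH2] := IH _ HF; have [IH3 IH4] := IH _ (AM_iv y HF).
split.
  rewrite (deR_cons _ _ hdA) (iv_deR _ hA) (deR_sub (theta y F) (d (iv y F))) IH2 IH3; ring.
move=> x.
rewrite (theta_cons _ _ _ hdA) (iv_deR _ hA) (theta_sub x (theta y F) (d (iv y F))) (deR_cons _ _ hA).
rewrite (deR_cons _ _ (AM_alt (AM_theta x HF))) (iv_theta _ _ hA).
rewrite (deR_sub (theta x (iv y F)) (iv (br x y) F)) IH4.
rewrite -(theta_comm _ _ _ HF); ring.
Qed.
Lemma dd F xs : AM F -> d (d F) xs = 0.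
Proof. by move=> HF; case: (dd_theta xs HF). Qed.
Lemma theta_deR x F xs : AM F -> theta x (d F) xs = d (theta x F) xs.
Proof. by move=> HF; case: (dd_theta xs HF). Qed.

Lemma move_one F pre u b r : AM F ->
  F (pre ++ u :: b ++ r) = (-1) ^+ size b * F (pre ++ b ++ u :: r).
Proof.
move=> HF; elim: b pre => [|v b IH] pre /=; first by rewrite expr0 mul1r.
rewrite (AM_alt HF) -cat_rcons IH cat_rcons signS; ring.
Qed.
Lemma block_swap F pre a b r : AM F ->
  F (pre ++ a ++ b ++ r) = (-1) ^+ (size a * size b) * F (pre ++ b ++ a ++ r).
Proof.
move=> HF; elim: a pre => [|u a IH] pre /=; first by rewrite mul0n expr0 mul1r.
rewrite -cat_rcons IH cat_rcons (move_one _ _ _ _ HF) mulSn exprD; ring.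
Qed.

Lemma sum_iota (f : nat -> A) n : \sum_(i <- iota 0 n) f i = \sum_(i < n) f i.
Proof. by rewrite -(big_mkord xpredT) /index_iota subn0. Qed.

Lemma size_drop_at T (s : seq T) j : (j < size s)%N -> size (drop_at j s) = (size s).-1.
Proof.
rewrite /drop_at size_cat size_take size_drop => h; rewrite h.
by case: (size s) h => // n hn; rewrite subSS addnBA // addKn ?ltnW.
Qed.

Lemma ictr_cat (x y : seq (A * seq g)) F zs : ictr (x ++ y) F zs = ictr x F zs + ictr y F zs.
Proof. by rewrite /ictr big_cat. Qed.
Lemma ictr_nil (F : fn) zs : ictr [::] F zs = 0.
Proof. by rewrite /ictr big_nil. Qed.

Lemma ictr_sn_word w1 w2 F zs : ictr (sn_word br w1 w2) F zs =
  \sum_(i < size w1) \sum_(j < size w2)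
    (-1) ^+ (i + j) * F (br (nth 0 w1 i) (nth 0 w2 j) :: drop_at i w1 ++ drop_at j w2 ++ zs).
Proof.
rewrite /ictr /sn_word big_flatten /= big_map sum_iota; apply: eq_bigr => i _.
by rewrite big_map sum_iota; apply: eq_bigr => j _ /=; rewrite -catA.
Qed.

Definition sv v w (G : fn) : fn := fun zs =>
  \sum_(j < size w) (-1) ^+ j * G (br v (nth 0 w j) :: drop_at j w ++ zs).

Lemma ictr_sv v w G zs : ictr (sn_word br [:: v] w) G zs = sv v w G zs.
Proof.
rewrite ictr_sn_word /= big_ord1; apply: eq_bigr => j _.
by rewrite add0n drop_at0.
Qed.

Lemma sv_cartan v w G zs : AM G -> sv v w G zs = theta v (iw w G) zs - iw w (theta v G) zs.
Proof.
elim: w G zs => [|x w IH] G zs HG.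
  by rewrite /sv /iw /= big_ord0 subrr.
have hA := AM_alt HG.
rewrite /sv /= big_ord_recl /= expr0 mul1r drop_at0.
have -> : \sum_(i < size w) (-1) ^+ bump 0 i * G (br v w`_(0 + i) :: drop_at (bump 0 i) (x :: w) ++ zs)
        = sv v w (iv x G) zs.
  by apply: eq_bigr => j _; rewrite bump0 add0n drop_atS /= (front_alt hA) signS mulrNN.
rewrite (IH _ _ (AM_iv x HG)).
have -> : iw (x :: w) G = iw w (iv x G) by [].
rewrite /iw /= (theta_cons _ _ _ hA); ring.
Qed.

Definition Lw (w : seq g) (F : fn) : fn := fun zs =>
  d (iw w F) zs - (-1) ^+ size w * iw w (d F) zs.

Lemma Lw_nil F zs : Lw [::] F zs = 0.
Proof. by rewrite /Lw expr0 mul1r; have -> : iw [::] F = F by []; rewrite subrr. Qed.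

Lemma Lw_cons v w F zs : AM F ->
  Lw (v :: w) F zs = Lw w (iv v F) zs + (-1) ^+ size w * iw w (theta v F) zs.
Proof.
move=> HF; rewrite /Lw /=.
have -> : iw (v :: w) F = iw w (iv v F) by [].
rewrite /iw /= (deR_cons _ _ (AM_alt HF)) signS; ring.
Qed.

Lemma Lw_csign w k F zs : Lw w (fun zs => (-1) ^+ k * F zs) zs = (-1) ^+ k * Lw w F zs.
Proof.
rewrite /Lw /iw.
have -> : (fun zs0 => (-1) ^+ k * F (w ++ zs0)) = (fun zs0 => (-1) ^+ k * iw w F zs0) by [].
rewrite !deR_csign; ring.
Qed.

Lemma sgnE k : (-1) ^+ k = (if odd k then -1 else 1) :> A.
Proof. by rewrite -signr_odd; case: (odd k); rewrite ?expr0 ?expr1. Qed.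

Lemma sign_sq k : (-1) ^+ k * (-1) ^+ k = 1 :> A.
Proof. by elim: k => [|k IH]; rewrite ?expr0 ?mulr1 // signS mulrNN. Qed.

Lemma sn_word_rec v w1 w2 F zs : AM F ->
  ictr (sn_word br (v :: w1) w2) F zs =
  ictr (sn_word br w1 w2) (iv v F) zs + (-1) ^+ size w1 * sv v w2 (iw w1 F) zs.
Proof.
move=> HF; rewrite !ictr_sn_word /= big_ord_recl addrC; congr (_ + _).
  apply: eq_bigr => i _; apply: eq_bigr => j _.
  rewrite lift0 /= (front_alt (AM_alt HF)) addSn signS /iv [drop_at i w1]/drop_at; ring.
rewrite /sv mulr_sumr; apply: eq_bigr => j _.
rewrite add0n drop_at0 -[X in F X]cat0s (move_one _ _ _ _ HF) /iw /=; ring.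
Qed.

Lemma sv_shift v w1 w2 F zs : AM F ->
  sv v w1 F (w2 ++ zs) = (-1) ^+ (size w1 * size w2) * sv v w1 (iw w2 F) zs.
Proof.
move=> HF; rewrite /sv mulr_sumr; apply: eq_bigr => j _ /=.
have hj : (size (drop_at j w1)).+1 = size w1 by rewrite size_drop_at // prednK // (leq_ltn_trans _ (ltn_ord j)).
have := block_swap [::] (br v w1`_j :: drop_at j w1) w2 zs HF; rewrite /= hj => ->.
rewrite /iw -catA /=; ring.
Qed.

Lemma cartan_word w1 w2 F zs : AM F ->
  ictr (sn_word br w1 w2) F zs =
  (-1) ^+ ((size w1).+1 * size w2) * Lw w1 (iw w2 F) zs - iw w2 (Lw w1 F) zs.
Proof.
elim: w1 F zs => [|v w1 IH] F zs HF.
  by rewrite ictr_sn_word big_ord0 /iw !Lw_nil mulr0 subrr.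
have HwF := AM_iw w2 HF.
rewrite (sn_word_rec _ _ _ _ HF) (IH _ _ (AM_iv v HF)) (sv_cartan _ _ _ (AM_iw w1 HF)).
rewrite (Lw_cons _ _ _ HwF).
have -> : iw w2 (Lw (v :: w1) F) zs = Lw (v :: w1) F (w2 ++ zs) by [].
rewrite (Lw_cons _ _ _ HF).
have -> : iv v (iw w2 F) = (fun zs => (-1) ^+ size w2 * iw w2 (iv v F) zs).
  by apply: funE => ys; rewrite /iv /iw (move_one [::] v w2 ys HF) /= mulrA sign_sq mul1r.
rewrite Lw_csign.
have e1 : theta v (iw w1 F) (w2 ++ zs) = theta v F (w1 ++ w2 ++ zs) + sv v w1 F (w2 ++ zs).
  rewrite (sv_cartan _ _ _ HF) /iw; ring.
have e2 : theta v (iw w2 F) (w1 ++ zs) = theta v (iw w1 (iw w2 F)) zs - sv v w1 (iw w2 F) zs.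
  rewrite (sv_cartan _ _ _ HwF) /iw; ring.
have e3 : iw w1 (iw w2 F) = (fun ys => (-1) ^+ (size w1 * size w2) * iw w2 (iw w1 F) ys).
  by apply: funE => ys; rewrite /iw (block_swap [::] w2 w1 ys HF) /= mulnC.
have e4 : iw w2 (iw w1 F) = iw (w1 ++ w2) F.
  by apply: funE => ys; rewrite /iw catA.
have c1 : iw w2 (theta v (iw w1 F)) zs = theta v (iw w1 F) (w2 ++ zs) by [].
have c2 : iw w1 (theta v (iw w2 F)) zs = theta v (iw w2 F) (w1 ++ zs) by [].
have c3 : iw w1 (theta v F) (w2 ++ zs) = theta v F (w1 ++ w2 ++ zs) by [].
have c4 : iw w2 (Lw w1 (iv v F)) zs = Lw w1 (iv v F) (w2 ++ zs) by [].
rewrite c1 c2 c3 c4 e1 e2 e3 theta_csign (sv_shift _ _ _ _ HF) /=.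
rewrite !sgnE !oddM /=.
case: (odd (size w1)); case: (odd (size w2)); rewrite /=; ring.
Qed.

Lemma ictr_sn_vs w a F zs : ictr (sn_vs D w a) F zs =
  \sum_(i < size w) (-1) ^+ (size w - i.+1) * D (nth 0 w i) a * F (drop_at i w ++ zs).
Proof. by rewrite /ictr /sn_vs big_map sum_iota. Qed.
Lemma ictr_sn_sv a w F zs : ictr (sn_sv D a w) F zs =
  \sum_(j < size w) (-1) ^+ j.+1 * D (nth 0 w j) a * F (drop_at j w ++ zs).
Proof. by rewrite /ictr /sn_sv big_map sum_iota. Qed.

Lemma cartan_vs w a F zs : AM F ->
  ictr (sn_vs D w a) F zs = Lw w (fun zs => a * F zs) zs - a * Lw w F zs.
Proof.
elim: w F zs => [|v w IH] F zs HF.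
  by rewrite ictr_sn_vs big_ord0 !Lw_nil mulr0 subrr.
rewrite ictr_sn_vs /= big_ord_recl /= subn1 /= drop_at0.
rewrite (Lw_cons _ _ _ (AM_scale a HF)) (Lw_cons _ _ _ HF).
have -> : iv v (fun zs => a * F zs) = (fun zs => a * iv v F zs) by [].
have -> : \sum_(i < size w) (-1) ^+ ((size w).+1 - (bump 0 i).+1) * D w`_(0 + i) a * F (drop_at (bump 0 i) (v :: w) ++ zs)
   = ictr (sn_vs D w a) (iv v F) zs.
  by rewrite ictr_sn_vs; apply: eq_bigr => i _; rewrite bump0 add0n subSS drop_atS.
rewrite (IH _ _ (AM_iv v HF)) /iw theta_scale; ring.
Qed.

Lemma cartan_sv a w F zs :
  ictr (sn_sv D a w) F zs = (-1) ^+ size w * wedge1 a (iw w F) zs - iw w (wedge1 a F) zs.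
Proof.
elim: w F zs => [|v w IH] F zs.
  by rewrite ictr_sn_sv big_ord0 expr0 mul1r /iw subrr.
rewrite ictr_sn_sv /= big_ord_recl /= drop_at0 expr1.
have -> : \sum_(i < size w) (-1) ^+ (bump 0 i).+1 * D w`_(0 + i) a * F (drop_at (bump 0 i) (v :: w) ++ zs)
   = - ictr (sn_sv D a w) (iv v F) zs.
  rewrite ictr_sn_sv -sumrN; apply: eq_bigr => i _; rewrite bump0 add0n drop_atS signS /iv /=; ring.
rewrite IH.
have -> : iw (v :: w) F = iw w (iv v F) by [].
have -> : iw (v :: w) (wedge1 a F) zs = wedge1 a F (v :: w ++ zs) by [].
have -> : iw w (wedge1 a (iv v F)) zs = wedge1 a (iv v F) (w ++ zs) by [].
rewrite wedge1_cons signS; ring.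
Qed.

Lemma size_absorb (a : A) (w : seq g) : size (absorb a w) = size w.
Proof. by case: w. Qed.

Lemma ictr_flatten (ss : seq (seq (A * seq g))) F zs :
  ictr (flatten ss) F zs = \sum_(s <- ss) ictr s F zs.
Proof. by rewrite /ictr big_flatten. Qed.

Lemma ictr_schouten (x y : seq (A * seq g)) F zs :
  ictr (schouten br D x y) F zs = \sum_(p <- x) \sum_(q <- y) ictr (sn_term br D p q) F zs.
Proof.
rewrite /schouten ictr_flatten big_map; apply: eq_bigr => p _.
by rewrite ictr_flatten big_map.
Qed.

Lemma hom_mem k (s : seq (A * seq g)) p : homog k s -> p \in s -> size p.2 = k.
Proof. by move=> /allP h /h /eqP. Qed.

Lemma homog_cons T k (p : A * seq T) s : homog k (p :: s) = (size p.2 == k) && homog k s.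
Proof. by []. Qed.

Lemma ictr_pos k (y : seq (A * seq g)) F zs : homog k.+1 y -> AM F ->
  ictr y F zs = \sum_(q <- y) iw (absorb q.1 q.2) F zs.
Proof.
move=> hy HF; rewrite /ictr; elim: y hy => [|[b w] y IH]; first by rewrite !big_nil.
rewrite homog_cons => /andP [hw hy]; rewrite !big_cons IH //; congr (_ + _).
by case: w hw => [|u w] //= _; rewrite /iw -(AM_Z HF [::]).
Qed.

Lemma ictr_zero (y : seq (A * seq g)) F zs : homog 0 y ->
  ictr y F zs = (\sum_(q <- y) q.1) * F zs.
Proof.
rewrite /ictr mulr_suml; elim: y => [|[b w] y IH]; first by rewrite !big_nil.
rewrite homog_cons => /andP [hw hy]; rewrite !big_cons IH //.
by case: w hw.
Qed.

Lemma Lw_sum w I (s : seq I) (G : I -> fn) zs :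
  Lw w (fun zs => \sum_(i <- s) G i zs) zs = \sum_(i <- s) Lw w (G i) zs.
Proof.
rewrite /Lw /iw.
have -> : (fun zs0 => \sum_(i <- s) G i (w ++ zs0)) = (fun zs0 => \sum_(i <- s) iw w (G i) zs0) by [].
rewrite deR_sum deR_sum mulr_sumr -sumrB; apply: eq_bigr => i _ //.
Qed.

Lemma wedge1_sum a I (s : seq I) (G : I -> fn) zs :
  wedge1 a (fun zs => \sum_(i <- s) G i zs) zs = \sum_(i <- s) wedge1 a (G i) zs.
Proof.
rewrite /wedge1 exchange_big; apply: eq_bigr => j _.
by rewrite !mulr_sumr.
Qed.

Lemma wedge1_suml I (s : seq I) (f : I -> A) F zs :
  wedge1 (\sum_(i <- s) f i) F zs = \sum_(i <- s) wedge1 (f i) F zs.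
Proof.
rewrite /wedge1 exchange_big; apply: eq_bigr => j _.
by rewrite Dsumr mulr_suml mulr_sumr; apply: eq_bigr => i _; rewrite mulrA.
Qed.

Lemma lieD_pos k (x : seq (A * seq g)) F zs : homog k.+1 x -> AM F ->
  lieD br D x k.+1 F zs = \sum_(p <- x) Lw (absorb p.1 p.2) F zs.
Proof.
move=> hx HF; rewrite /lieD.
have -> : ictr x F = (fun zs => \sum_(p <- x) iw (absorb p.1 p.2) F zs).
  by apply: funE => ys; rewrite (ictr_pos _ hx HF).
rewrite deR_sum (ictr_pos _ hx (AM_deR HF)) mulr_sumr -sumrB big_seq [RHS]big_seq.
by apply: eq_bigr => p hp; rewrite /Lw size_absorb (hom_mem hx hp).
Qed.
Lemma lieD_zero (x : seq (A * seq g)) F zs : homog 0 x ->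
  lieD br D x 0 F zs = wedge1 (\sum_(p <- x) p.1) F zs.
Proof.
move=> hx; rewrite /lieD.
have -> : ictr x F = (fun zs => (\sum_(p <- x) p.1) * F zs).
  by apply: funE => ys; rewrite (ictr_zero _ _ hx).
by rewrite deR_scale (ictr_zero _ _ hx) expr0 mul1r addrC addKr.
Qed.
Lemma AM_lieD (x : seq (A * seq g)) k F : AM F -> AM (lieD br D x k F).
Proof.
move=> HF; rewrite /lieD; apply: AM_sub.
  exact: AM_deR (AM_ictr _ HF).
by apply: AM_scale; apply: AM_ictr; apply: AM_deR.
Qed.


Lemma sum2_in (x y : seq (A * seq g)) (f h : A * seq g -> A * seq g -> A) :
  (forall p q, p \in x -> q \in y -> f p q = h p q) ->
  \sum_(p <- x) \sum_(q <- y) f p q = \sum_(p <- x) \sum_(q <- y) h p q.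
Proof.
move=> e; rewrite big_seq [RHS]big_seq; apply: eq_bigr => p hp.
by rewrite big_seq [RHS]big_seq; apply: eq_bigr => q hq; apply: e.
Qed.

Lemma cartan_tensor kx ky (x y : seq (A * seq g)) F zs : homog kx x -> homog ky y -> AM F ->
  ictr (schouten br D x y) F zs =
  (-1) ^+ (kx.+1 * ky) * lieD br D x kx (ictr y F) zs - ictr y (lieD br D x kx F) zs.
Proof.
move=> hx hy HF; rewrite ictr_schouten.
case: kx hx => [|kx] hx; case: ky hy => [|ky] hy.
- rewrite (sum2_in (h := fun _ _ => 0)); last first.
    move=> [a w] [b u] /= /(hom_mem hx) /= /size0nil -> /(hom_mem hy) /= /size0nil ->.
    exact: ictr_nil.
  rewrite big1 ?mul1n ?expr0 ?mul1r; last by move=> p _; rewrite big1.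
  rewrite !lieD_zero // (ictr_zero _ _ hy).
  have -> : ictr y F = (fun zs => (\sum_(q <- y) q.1) * F zs) by apply: funE => ys; rewrite (ictr_zero _ _ hy).
  by rewrite wedge1_scale lieD_zero // subrr.
- rewrite (sum2_in (h := fun p q => (-1) ^+ ky.+1 * wedge1 p.1 (iw (absorb q.1 q.2) F) zs
                                 - wedge1 p.1 F (absorb q.1 q.2 ++ zs))); last first.
    move=> [a w] [b u] /= /(hom_mem hx) /= /size0nil -> /(hom_mem hy) /=.
    by case: u => [|u0 u] //= hu; rewrite cartan_sv /= hu.
  have e1 : lieD br D x 0 (ictr y F) zs =
      \sum_(p <- x) \sum_(q <- y) wedge1 p.1 (iw (absorb q.1 q.2) F) zs.
    rewrite lieD_zero //.
    have -> : ictr y F = (fun zs => \sum_(q <- y) iw (absorb q.1 q.2) F zs).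
      by apply: funE => ys; rewrite (ictr_pos _ hy HF).
    by rewrite wedge1_suml; apply: eq_bigr => p _; rewrite wedge1_sum.
  have e2 : ictr y (lieD br D x 0 F) zs =
      \sum_(p <- x) \sum_(q <- y) wedge1 p.1 F (absorb q.1 q.2 ++ zs).
    rewrite (ictr_pos _ hy (AM_lieD _ _ HF)) exchange_big; apply: eq_bigr => q _.
    by rewrite /iw lieD_zero // wedge1_suml.
  rewrite e1 e2 mul1n mulr_sumr -sumrB; apply: eq_bigr => p _.
  by rewrite mulr_sumr -sumrB.
- rewrite (sum2_in (h := fun p q => Lw (absorb p.1 p.2) (fun zs => q.1 * F zs) zs
                                 - q.1 * Lw (absorb p.1 p.2) F zs)); last first.
    move=> [a w] [b u] /= /(hom_mem hx) /= + /(hom_mem hy) /= /size0nil ->.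
    by case: w => [|w0 w] //= hw; rewrite (cartan_vs _ _ _ HF).
  have e1 : lieD br D x kx.+1 (ictr y F) zs =
      \sum_(p <- x) \sum_(q <- y) Lw (absorb p.1 p.2) (fun zs => q.1 * F zs) zs.
    rewrite (lieD_pos _ hx (AM_ictr _ HF)); apply: eq_bigr => p _.
    have -> : ictr y F = (fun zs => \sum_(q <- y) q.1 * F zs).
      by apply: funE => ys; rewrite (ictr_zero _ _ hy) mulr_suml.
    by rewrite Lw_sum.
  have e2 : ictr y (lieD br D x kx.+1 F) zs =
      \sum_(p <- x) \sum_(q <- y) q.1 * Lw (absorb p.1 p.2) F zs.
    rewrite (ictr_zero _ _ hy) (lieD_pos _ hx HF) mulr_suml exchange_big /=.
    by apply: eq_bigr => q _; rewrite mulr_sumr.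
  rewrite e1 e2 muln0 expr0 mul1r -sumrB; apply: eq_bigr => p _.
  by rewrite -sumrB.
- rewrite (sum2_in (h := fun p q => (-1) ^+ (kx.+2 * ky.+1) * Lw (absorb p.1 p.2) (iw (absorb q.1 q.2) F) zs
                                 - Lw (absorb p.1 p.2) F (absorb q.1 q.2 ++ zs))); last first.
    move=> [a w] [b u] /= /(hom_mem hx) /= + /(hom_mem hy) /=.
    case: w => [|w0 w] //= hw; case: u => [|u0 u] //= hu.
    by rewrite (cartan_word _ _ _ HF) /= hw hu.
  have e1 : lieD br D x kx.+1 (ictr y F) zs =
      \sum_(p <- x) \sum_(q <- y) Lw (absorb p.1 p.2) (iw (absorb q.1 q.2) F) zs.
    rewrite (lieD_pos _ hx (AM_ictr _ HF)); apply: eq_bigr => p _.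
    have -> : ictr y F = (fun zs => \sum_(q <- y) iw (absorb q.1 q.2) F zs).
      by apply: funE => ys; rewrite (ictr_pos _ hy HF).
    by rewrite Lw_sum.
  have e2 : ictr y (lieD br D x kx.+1 F) zs =
      \sum_(p <- x) \sum_(q <- y) Lw (absorb p.1 p.2) F (absorb q.1 q.2 ++ zs).
    rewrite (ictr_pos _ hy (AM_lieD _ _ HF)) exchange_big; apply: eq_bigr => q _.
    by rewrite /iw (lieD_pos _ hx HF).
  rewrite e1 e2 mulr_sumr -sumrB; apply: eq_bigr => p _.
  by rewrite mulr_sumr -sumrB.
Qed.

Lemma ictr_comm kx ky (x y : seq (A * seq g)) F zs : homog kx x -> homog ky y -> AM F ->
  ictr x (ictr y F) zs = (-1) ^+ (kx * ky) * ictr y (ictr x F) zs.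
Proof.
move=> hx hy HF; rewrite /ictr mulr_sumr big_seq.
under eq_bigr => p hp do rewrite mulr_sumr big_seq.
rewrite exchange_big /= [RHS]big_seq; apply: eq_bigr => q hq.
rewrite !mulr_sumr [RHS]big_seq; apply: eq_bigr => p hp.
rewrite (block_swap [::] q.2 p.2 zs HF) /= (hom_mem hx hp) (hom_mem hy hq) mulnC; ring.
Qed.

Lemma ictr_fzero (x : seq (A * seq g)) zs : ictr x (fun _ => 0) zs = 0.
Proof. by rewrite /ictr big1 // => p _; rewrite mulr0. Qed.

Lemma ictr_tcomb (s t : seq (A * seq g)) c F zs :
  ictr (tcomb s c t) F zs = ictr s F zs + c * ictr t F zs.
Proof.
rewrite /tcomb ictr_cat; congr (_ + _).
by rewrite /ictr big_map mulr_sumr; apply: eq_bigr => p _; rewrite mulrA.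
Qed.

Lemma lieD_d (x : seq (A * seq g)) k G zs : AM G ->
  lieD br D x k (d G) zs = - (-1) ^+ k * d (lieD br D x k G) zs.
Proof.
move=> HG; rewrite /lieD.
have -> : ictr x (d (d G)) = (fun _ => 0).
  by apply: funE => ys; rewrite /ictr big1 // => p _; rewrite dd // mulr0.
rewrite /= mulr0 subr0.
have -> : (fun zs => d (ictr x G) zs - (-1) ^+ k * ictr x (d G) zs)
        = (fun zs => d (ictr x G) zs + (- (-1) ^+ k) * ictr x (d G) zs).
  by apply: funE => ys; rewrite mulNr.
rewrite deR_add -signS deR_csign dd ?signS; last exact: AM_ictr.
by rewrite add0r mulrA mulrNN sign_sq mul1r.
Qed.

Definition Mn n (fs : seq (dual g)) (h : nat -> g) : 'M[A]_n :=
  \matrix_(i < n, j < n) (nth (dual0 g) fs i) (h j).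

Lemma det_perm_cols n fs (h1 h2 : nat -> g) (s : 'S_n) :
  (forall j : 'I_n, h2 j = h1 (s j)) ->
  \det (Mn n fs h2) = (-1) ^+ s * \det (Mn n fs h1).
Proof.
move=> e; have -> : Mn n fs h2 = col_perm s (Mn n fs h1) by apply/matrixP => i j; rewrite !mxE e.
by rewrite col_permE det_mulmx det_perm odd_permV mulrC.
Qed.

Lemma det_lin_col n fs (h h1 h2 : nat -> g) (k : 'I_n) a :
  h k = a *: h1 k + h2 k -> (forall j : 'I_n, j != k -> h j = h1 j /\ h j = h2 j) ->
  \det (Mn n fs h) = a * \det (Mn n fs h1) + \det (Mn n fs h2).
Proof.
move=> ek ej; rewrite !(expand_det_col _ k) mulr_sumr -big_split; apply: eq_bigr => i _.
have c1 : cofactor (Mn n fs h) i k = cofactor (Mn n fs h1) i k.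
  rewrite /cofactor; congr (_ * \det _); apply/matrixP => a' b; rewrite !mxE.
  by case: (ej (lift k b)) => [|-> //]; rewrite eq_sym neq_lift.
have c2 : cofactor (Mn n fs h) i k = cofactor (Mn n fs h2) i k.
  rewrite /cofactor; congr (_ * \det _); apply/matrixP => a' b; rewrite !mxE.
  by case: (ej (lift k b)) => [|_ -> //]; rewrite eq_sym neq_lift.
rewrite -c1 -c2 !mxE ek (dvalP (nth (dual0 g) fs i)) mulrDl -mulrA. exact: erefl.
Qed.

Definition Psi (fs : seq (dual g)) n (h : nat -> g) : A :=
  if size fs == n then \det (Mn n fs h) else 0.
Definition PhiF (fs : seq (dual g)) : fn := fun xs => Psi fs (size xs) (nth 0 xs).

Lemma cot_evalE (s : seq (A * seq (dual g))) xs :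
  cot_eval s xs = \sum_(p <- s) p.1 * PhiF p.2 xs.
Proof.
rewrite /cot_eval big_mkcond; apply: eq_bigr => p _.
by rewrite /PhiF /Psi; case: eqP => _; rewrite ?mulr0.
Qed.

Lemma nth_pre_add (pre l : seq g) m : nth 0 (pre ++ l) (size pre + m) = nth 0 l m.
Proof. by rewrite nth_cat ltnNge leq_addr /= addKn. Qed.

Lemma nth_pre0 (pre l : seq g) x : nth 0 (pre ++ x :: l) (size pre) = x.
Proof. by rewrite -[size pre]addn0 nth_pre_add. Qed.
Lemma nth_pre1 (pre l : seq g) x y : nth 0 (pre ++ x :: y :: l) (size pre).+1 = y.
Proof. by rewrite -addn1 nth_pre_add. Qed.

Lemma nth_swap1 (pre r : seq g) x y j : j != size pre ->
  nth 0 (pre ++ x :: r) j = nth 0 (pre ++ y :: r) j.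
Proof.
move=> hj; rewrite !nth_cat; case: ltnP => // hle.
by case e: (j - size pre)%N => [|m] //; move: hj; rewrite -(subnK hle) e add0n eqxx.
Qed.

Lemma nth_swap2 (pre r : seq g) u v j : j != size pre -> j != (size pre).+1 ->
  nth 0 (pre ++ u :: v :: r) j = nth 0 (pre ++ v :: u :: r) j.
Proof.
move=> hj hj1; rewrite !nth_cat; case: ltnP => // hle.
case e: (j - size pre)%N => [|[|m]] //.
  by move: hj; rewrite -(subnK hle) e add0n eqxx.
by move: hj1; rewrite -(subnK hle) e add1n eqxx.
Qed.

Lemma AM_PhiF fs : AM (PhiF fs).
Proof.
split.
  move=> pre u v r; rewrite /PhiF.
  have -> : size (pre ++ v :: u :: r) = size (pre ++ u :: v :: r) by rewrite !size_cat.
  rewrite /Psi; case: eqP => _; last by rewrite oppr0.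
  set N := size (pre ++ u :: v :: r).
  have hk : (size pre < N)%N by rewrite /N size_cat /=; lia.
  have hk1 : ((size pre).+1 < N)%N by rewrite /N size_cat /=; lia.
  pose k := Ordinal hk; pose k1 := Ordinal hk1.
  rewrite (@det_perm_cols N fs (nth 0 (pre ++ u :: v :: r)) (nth 0 (pre ++ v :: u :: r)) (tperm k k1)).
    rewrite odd_tperm.
    have -> : (k != k1) by apply/eqP => /(congr1 val) /=; lia.
    by rewrite expr1 mulN1r opprK.
  move=> j; case: tpermP => [->|->|hj1 hj2] /=.
  - by rewrite nth_pre0 nth_pre1.
  - by rewrite nth_pre0 nth_pre1.
  apply: nth_swap2; apply/eqP => e.
    by apply: hj1; apply: val_inj.
  by apply: hj2; apply: val_inj.
move=> pre a u w r; rewrite /PhiF.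
have -> : size (pre ++ u :: r) = size (pre ++ (a *: u + w) :: r) by rewrite !size_cat.
have -> : size (pre ++ w :: r) = size (pre ++ (a *: u + w) :: r) by rewrite !size_cat.
rewrite /Psi; case: eqP => _; last by rewrite mulr0 addr0.
set N := size (pre ++ (a *: u + w) :: r).
have hk : (size pre < N)%N by rewrite /N size_cat /=; lia.
apply: (@det_lin_col N fs (nth 0 (pre ++ (a *: u + w) :: r)) (nth 0 (pre ++ u :: r)) (nth 0 (pre ++ w :: r)) (Ordinal hk) a) => /=.
  by rewrite -[size pre]addn0 !nth_pre_add.
move=> j hj; have hj' : (j : nat) != size pre by apply/eqP => e; move: hj; rewrite -(inj_eq val_inj) /= e eqxx.
by split; apply: nth_swap1.
Qed.

Lemma AM_cot_eval (s : seq (A * seq (dual g))) : AM (cot_eval s).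
Proof.
have -> : cot_eval s = (fun xs => \sum_(p <- s) p.1 * PhiF p.2 xs) by apply: funE => xs; rewrite cot_evalE.
by apply: AM_sum => p; apply: AM_scale; apply: AM_PhiF.
Qed.

Lemma nth_drop_at T (x0 : T) s i a : (i < size s)%N ->
  nth x0 (drop_at i s) a = nth x0 s (bump i a).
Proof.
move=> hi; rewrite /drop_at nth_cat size_take hi /bump.
case: (ltnP a i) => ha.
  by rewrite nth_take // leqNgt ha.
rewrite nth_drop.
by have -> : (i.+1 + (a - i) = true + a)%N by rewrite /=; lia.
Qed.

Definition ctr1 (v : g) (c : seq (A * seq (dual g))) : seq (A * seq (dual g)) :=
  flatten [seq [seq ((-1) ^+ i * (p.1 * (nth (dual0 g) p.2 i) v), drop_at i p.2)
               | i <- iota 0 (size p.2)] | p <- c].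

Lemma PhiF_cons fs v zs :
  PhiF fs (v :: zs) = \sum_(i <- iota 0 (size fs)) (-1) ^+ i * ((nth (dual0 g) fs i) v * PhiF (drop_at i fs) zs).
Proof.
rewrite /PhiF /Psi /=; case: eqP => hs; last first.
  rewrite big_seq big1 // => i; rewrite mem_iota add0n => /andP [_ hi].
  rewrite size_drop_at //; case: eqP => [e|_]; last by rewrite !mulr0.
  by case: hs; rewrite -e prednK // (leq_ltn_trans _ hi).
rewrite hs sum_iota (expand_det_col _ ord0); apply: eq_bigr => i _.
rewrite size_drop_at hs // eqxx /= /cofactor addn0 !mxE /=.
rewrite mulrCA; congr (_ * (_ * \det _)).
apply/matrixP => a b; rewrite !mxE lift0 /=.
by rewrite nth_drop_at // hs.
Qed.

Lemma cot_eval_ctr1 c v zs : cot_eval c (v :: zs) = cot_eval (ctr1 v c) zs.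
Proof.
rewrite !cot_evalE /ctr1 big_flatten big_map; apply: eq_bigr => p _.
rewrite PhiF_cons big_map mulr_sumr; apply: eq_bigr => i _ /=; ring.
Qed.

Fixpoint ctrw (w : seq g) c := if w is v :: w' then ctrw w' (ctr1 v c) else c.
Lemma cot_eval_ctrw w c zs : cot_eval c (w ++ zs) = cot_eval (ctrw w c) zs.
Proof. by elim: w c => [|v w IH] c //=; rewrite cot_eval_ctr1 IH. Qed.

Lemma ictr_cot (x : seq (A * seq g)) c : exists c', cot_eval c' =1 ictr x (cot_eval c).
Proof.
elim: x => [|p x [c' IH]].
  by exists [::] => zs; rewrite /cot_eval /ictr !big_nil.
exists ([seq (p.1 * q.1, q.2) | q <- ctrw p.2 c] ++ c') => zs.
rewrite /ictr big_cons -/(ictr x (cot_eval c) zs) -IH.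
rewrite /cot_eval big_cat /= big_map; congr (_ + _).
rewrite -/(cot_eval c (p.2 ++ zs)) cot_eval_ctrw /cot_eval mulr_sumr.
by apply: eq_bigr => q _; rewrite mulrA.
Qed.

Lemma lieD_indep kz ky kw (z z' y w : seq (A * seq g)) O zs :
  AM O -> homog kz z -> homog kz z' -> homog ky y -> homog kw w ->
  ictr z O = ictr z' O -> d (ictr y O) = ictr w O ->
  lieD br D z kz (ictr y O) zs = lieD br D z' kz (ictr y O) zs.
Proof.
move=> AO hz hz' hy hw ezz' edy; rewrite /lieD edy.
have -> : ictr z (ictr y O) = ictr z' (ictr y O).
  apply: funE => ys; rewrite (ictr_comm _ hz hy AO) (ictr_comm _ hz' hy AO) ezz' //.
have -> : ictr z (ictr w O) zs = ictr z' (ictr w O) zs.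
  by rewrite (ictr_comm _ hz hw AO) (ictr_comm _ hz' hw AO) ezz'.
by [].
Qed.

Lemma main_in (n : nat) (om : cotensor g) :
  torsionless g ->
  homog n.+1 om -> deR br D (cot_eval om) =1 (fun _ => 0) ->
  forall (m1 m2 k1 k2 : nat) (f1 f2 : cotensor g) (x1 x2 y1 y2 : tensor g),
  (k1 + m1)%N = n -> (k2 + m2)%N = n ->
  homog m1 f1 -> homog m2 f2 ->
  homog k1 x1 -> homog k2 x2 -> homog k1.+1 y1 -> homog k2.+1 y2 ->
  ictr x1 (cot_eval om) =1 deR br D (cot_eval f1) ->
  ictr x2 (cot_eval om) =1 deR br D (cot_eval f2) ->
  ictr y1 (cot_eval om) =1 cot_eval f1 ->
  ictr y2 (cot_eval om) =1 cot_eval f2 ->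
  let B := pbr br D x1 k1 x2 k2 (cot_eval f1) (cot_eval f2) in
  [/\ exists c : cotensor g, cot_eval c =1 B,
      forall x1' x2' : tensor g, homog k1 x1' -> homog k2 x2' ->
        ictr x1' (cot_eval om) =1 deR br D (cot_eval f1) ->
        ictr x2' (cot_eval om) =1 deR br D (cot_eval f2) ->
        pbr br D x1' k1 x2' k2 (cot_eval f1) (cot_eval f2) =1 B,
      ictr (tcomb (schouten br D x2 y1) (- psign A k1 k2) (schouten br D x1 y2))
           (cot_eval om) =1 B
    & ictr (tcomb (schouten br D x2 x1) (- psign A k1 k2) (schouten br D x1 x2))
           (cot_eval om) =1 deR br D B].
Proof.
move=> _ _ hdO m1 m2 k1 k2 f1 f2 x1 x2 y1 y2 _ _ _ _ hx1 hx2 hy1 hy2 hX1 hX2 hY1 hY2 B.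
have AO := AM_cot_eval om; have AF1 := AM_cot_eval f1; have AF2 := AM_cot_eval f2.
move: hX1 hX2 hY1 hY2 hdO => /funE eX1 /funE eX2 /funE eY1 /funE eY2 /funE edO.
have eL1O : lieD br D x1 k1 (cot_eval om) = (fun _ => 0).
  by apply: funE => zs; rewrite /lieD eX1 dd // edO ictr_fzero mulr0 subr0.
have eL2O : lieD br D x2 k2 (cot_eval om) = (fun _ => 0).
  by apply: funE => zs; rewrite /lieD eX2 dd // edO ictr_fzero mulr0 subr0.
have c3 : ictr (tcomb (schouten br D x2 y1) (- psign A k1 k2) (schouten br D x1 y2))
           (cot_eval om) =1 B.
  move=> zs; rewrite ictr_tcomb (cartan_tensor _ hx2 hy1 AO) (cartan_tensor _ hx1 hy2 AO).
  rewrite eY1 eY2 eL1O eL2O !ictr_fzero /B /pbr /psign [(k2.+1 * k1.+1)%N]mulnC.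
  rewrite !sgnE; case: (odd _); ring.
split => //.
- have [c hc] := ictr_cot (tcomb (schouten br D x2 y1) (- psign A k1 k2) (schouten br D x1 y2)) om.
  by exists c => zs; rewrite hc c3.
- move=> x1' x2' hx1' hx2' /funE eX1' /funE eX2' zs.
  rewrite /B /pbr -eY1 -eY2.
  rewrite (lieD_indep _ AO hx1' hx1 hy2 hx2) ?eX1 ?eX1' ?eY2 ?eX2 //.
  by rewrite (lieD_indep _ AO hx2' hx2 hy1 hx1) ?eX2 ?eX2' ?eY1 ?eX1.
move=> zs.
have eB : d B zs = - d (lieD br D x1 k1 (cot_eval f2)) zs + psign A k1 k2 * d (lieD br D x2 k2 (cot_eval f1)) zs.
  rewrite /B /pbr (deR_add (fun zs => - lieD br D x1 k1 (cot_eval f2) zs) (fun zs => psign A k1 k2 * lieD br D x2 k2 (cot_eval f1) zs)).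
  by rewrite (deR_opp (lieD br D x1 k1 (cot_eval f2))) /psign (deR_csign _ (lieD br D x2 k2 (cot_eval f1))).
rewrite eB ictr_tcomb (cartan_tensor _ hx2 hx1 AO) (cartan_tensor _ hx1 hx2 AO).
rewrite eX1 eX2 eL1O eL2O !ictr_fzero (lieD_d x2 k2 zs AF1) (lieD_d x1 k1 zs AF2).
rewrite /psign !sgnE !oddM /=.
case: (odd k1); case: (odd k2); rewrite /=; ring.
Qed.

End Dev.

Theorem mainTheorem7 (R : realType) (A : comAlgType R) (g : lmodType A)
  (br : g -> g -> g) (D : g -> A -> A) (n : nat) (om : cotensor g) :
  (* n-plectic structure *)
  lie_rinehart br D -> torsionless g ->
  homog n.+1 om -> deR br D (cot_eval om) =1 (fun _ => 0) ->
  forall (m1 m2 k1 k2 : nat) (f1 f2 : cotensor g) (x1 x2 y1 y2 : tensor g),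
  (* f_i homogeneous of degree m_i, Hamilton tensors x_i of degree n - m_i,
     Poisson constraints y_i of degree n + 1 - m_i *)
  (k1 + m1)%N = n -> (k2 + m2)%N = n ->
  homog m1 f1 -> homog m2 f2 ->
  homog k1 x1 -> homog k2 x2 -> homog k1.+1 y1 -> homog k2.+1 y2 ->
  ictr x1 (cot_eval om) =1 deR br D (cot_eval f1) ->
  ictr x2 (cot_eval om) =1 deR br D (cot_eval f2) ->
  ictr y1 (cot_eval om) =1 cot_eval f1 ->
  ictr y2 (cot_eval om) =1 cot_eval f2 ->
  let B := pbr br D x1 k1 x2 k2 (cot_eval f1) (cot_eval f2) in
  [/\ (* {f1,f2} is (the functional of) a cotensor *)
      exists c : cotensor g, cot_eval c =1 B,
      (* independence of the choice of Hamilton tensors *)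
      forall x1' x2' : tensor g, homog k1 x1' -> homog k2 x2' ->
        ictr x1' (cot_eval om) =1 deR br D (cot_eval f1) ->
        ictr x2' (cot_eval om) =1 deR br D (cot_eval f2) ->
        pbr br D x1' k1 x2' k2 (cot_eval f1) (cot_eval f2) =1 B,
      (* Poisson constraint of {f1,f2} *)
      ictr (tcomb (schouten br D x2 y1) (- psign A k1 k2) (schouten br D x1 y2))
           (cot_eval om) =1 B
    & (* Hamilton tensor of {f1,f2} *)
      ictr (tcomb (schouten br D x2 x1) (- psign A k1 k2) (schouten br D x1 x2))
           (cot_eval om) =1 deR br D B].
Proof.
move=> LR; exact: (main_in LR).
Qed.
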